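(* Let $G$ be a finite bipartite graph. If $G$ has a nonempty channel, then the number $m_G$ of perfect matchings of $G$ is even.
   Context: A channel of a graph $G=(V,E)$ is a set $C\subseteq V$ such that every vertex of $G$ is adjacent to an even number of vertices of $C$. *)

(* Defs.v *)
From mathcomp Require Import all_boot.
Set Implicit Arguments. Unset Strict Implicit. Unset Printing Implicit Defensive.

Definition simple_graph (T : finType) (e : rel T) : Prop :=
  symmetric e /\ irreflexive e.

Definition bipartite (T : finType) (e : rel T) : Prop :=
  exists c : T -> bool, forall x y, e x y -> c x != c y.

Definition channel (T : finType) (e : rel T) (C : {set T}) : Prop :=
  forall v : T, ~~ odd #|[set u in C | e v u]|.

Definition is_edge (T : finType) (e : rel T) (S : {set T}) : bool :=
  [exists x, exists y, e x y && (S == [set x; y])].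

Definition perfect_matching (T : finType) (e : rel T) (M : {set {set T}}) : bool :=
  [forall S in M, is_edge e S] && [forall v, #|[set S in M | v \in S]| == 1].

Definition num_perfect_matchings (T : finType) (e : rel T) : nat :=
  #|[set M : {set {set T}} | perfect_matching e M]|.

(* Main.v *)
Require Import Defs.
From mathcomp Require Import all_boot.
Set Implicit Arguments. Unset Strict Implicit. Unset Printing Implicit Defensive.

Section Match.
Variables (T : finType) (e : rel T).
Variable (esym : symmetric e).
Variable (eirr : irreflexive e).

Lemma set2_edge u w x y : e u w -> [set x; y] = [set u; w] -> e x y.
Proof.
move=> euw E.
have hx : x \in [set u; w] by rewrite -E !inE eqxx.
have hy : y \in [set u; w] by rewrite -E !inE eqxx orbT.
have hu : u \in [set x; y] by rewrite E !inE eqxx.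
have hw : w \in [set x; y] by rewrite E !inE eqxx orbT.
move: hx hy hu hw; rewrite !inE.
case/orP=>/eqP ex; case/orP=>/eqP ey; subst => //; rewrite ?eqxx ?orbT ?orbb //.
- by move=> _ /eqP ewx; move: euw; rewrite ewx eirr.
- by rewrite esym.
- by move=> /eqP ewx _; move: euw; rewrite ewx eirr.
Qed.

Definition mate (M : {set {set T}}) x y := [set x; y] \in M.

Lemma mate_sym M x y : mate M x y -> mate M y x.
Proof. by rewrite /mate setUC. Qed.

Lemma mate_edge M x y : perfect_matching e M -> mate M x y -> e x y.
Proof.
case/andP=> /forall_inP He _ /He /existsP[u /existsP[w /andP[euw /eqP E]]].
exact: set2_edge euw E.
Qed.

Lemma mate_uniq M x y y' : perfect_matching e M -> mate M x y -> mate M x y' -> y = y'.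
Proof.
move=> PM m1 m2; have exy := mate_edge PM m1.
move: PM => /andP[_ /forallP /(_ x) /cards1P[S0 HS]].
have h1 : [set x; y] \in [set S in M | x \in S] by rewrite inE -/(mate M x y) m1 !inE eqxx.
have h2 : [set x; y'] \in [set S in M | x \in S] by rewrite inE -/(mate M x y') m2 !inE eqxx.
move: h1 h2; rewrite HS !inE => /eqP E1 /eqP E2.
have : y \in [set x; y'] by rewrite E2 -E1 !inE eqxx orbT.
rewrite !inE => /orP[/eqP eyx|/eqP //]; by move: exy; rewrite eyx eirr.
Qed.

Lemma mate_ex M x : perfect_matching e M -> exists y, mate M x y.
Proof.
case/andP=> /forall_inP He /forallP /(_ x) /cards1P[S0 HS].
have : S0 \in [set S in M | x \in S] by rewrite HS inE.
rewrite inE => /andP[S0M xS0].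
move: (He _ S0M) => /existsP[u /existsP[w /andP[euw /eqP E]]].
move: xS0; rewrite E !inE => /orP[]/eqP ->.
- by exists w; rewrite /mate -E.
- by exists u; rewrite /mate setUC -E.
Qed.

Variable (c : T -> bool).
Variable (ebip : forall x y, e x y -> c x != c y).

Definition Bij (f : {ffun T -> T}) : bool :=
  [forall x, c x ==> (f x == x)] && [forall x, ~~ c x ==> c (f x)] &&
  [forall y, c y ==> (#|[set x | ~~ c x & f x == y]| == 1)].
Definition Good (f : {ffun T -> T}) := Bij f && [forall x, ~~ c x ==> e x (f x)].

Definition fM (M : {set {set T}}) : {ffun T -> T} :=
  [ffun x => if c x then x else odflt x [pick y | mate M x y]].
Definition gM (f : {ffun T -> T}) : {set {set T}} :=
  [set [set x; f x] | x in [set x | ~~ c x]].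

Lemma fM_mate M x : perfect_matching e M -> ~~ c x -> mate M x (fM M x).
Proof.
move=> PM cx; rewrite ffunE (negbTE cx).
case: pickP => [y //| H]; case: (mate_ex x PM) => y hy.
by move: (H y); rewrite hy.
Qed.

Lemma cdiff x y : e x y -> c y = ~~ c x.
Proof. by move/ebip; case: (c x); case: (c y). Qed.

Lemma P3 M : perfect_matching e M -> Good (fM M).
Proof.
move=> PM; rewrite /Good /Bij -!andbA; apply/and4P; split.
- by apply/forallP=> x; apply/implyP=> cx; rewrite ffunE cx.
- apply/forallP=> x; apply/implyP=> cx.
  by rewrite (cdiff (mate_edge PM (fM_mate PM cx))) cx.
- apply/forallP=> y; apply/implyP=> cy; apply/cards1P.
  case: (mate_ex y PM) => x hyx.
  have hxy := mate_sym hyx.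
  have cx : ~~ c x by rewrite -[c x]negbK -(cdiff (mate_edge PM hxy)) cy.
  exists x; apply/setP=> z; rewrite !inE.
  apply/andP/eqP => [[cz /eqP fz]|->].
  + have := fM_mate PM cz; rewrite fz => /mate_sym hyz.
    exact: (mate_uniq PM hyz hyx).
  + by rewrite cx (mate_uniq PM (fM_mate PM cx) hxy).
- apply/forallP=> x; apply/implyP=> cx.
  exact: (mate_edge PM (fM_mate PM cx)).
Qed.

Lemma P4 M : perfect_matching e M -> gM (fM M) = M.
Proof.
move=> PM; apply/setP=> S; apply/imsetP/idP.
- by case=> x; rewrite inE => cx ->; apply: fM_mate.
- move=> SM; move: PM (PM) => /andP[/forall_inP He _] PM.
  case/existsP: (He _ SM) => u /existsP[w /andP[euw /eqP E]].
  have muw : mate M u w by rewrite /mate -E.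
  case cu: (c u).
  + have cw : ~~ c w by rewrite (cdiff euw) cu.
    exists w; first by rewrite inE.
    by rewrite E setUC (mate_uniq PM (fM_mate PM cw) (mate_sym muw)).
  + exists u; first by rewrite inE cu.
    by rewrite E (mate_uniq PM (fM_mate PM (negbT cu)) muw).
Qed.

Lemma P1 f : Good f -> perfect_matching e (gM f).
Proof.
rewrite /Good /Bij -!andbA => /and4P[/forallP hB /forallP hA /forallP hU /forallP hE].
apply/andP; split.
- apply/forall_inP=> S /imsetP[x]; rewrite inE => cx ->.
  by apply/existsP; exists x; apply/existsP; exists (f x); rewrite (implyP (hE x) cx) eqxx.
- apply/forallP=> v; apply/cards1P.
  have key : forall u, ~~ c u -> v \in [set u; f u] ->
     (forall x, ~~ c x -> v \in [set x; f x] -> x = u) ->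
     exists S, [set S0 in gM f | v \in S0] = [set S].
    move=> u cu vu H; exists [set u; f u]; apply/setP=> S; rewrite !inE.
    apply/andP/eqP => [[/imsetP[x]]|->].
    + by rewrite inE => cx -> vx; rewrite (H x cx vx).
    + by split=> //; apply/imsetP; exists u; rewrite ?inE.
  case cv: (c v).
  + move: (implyP (hU v) cv) => /cards1P[u Hu].
    have : u \in [set x | ~~ c x & f x == v] by rewrite Hu inE.
    rewrite inE => /andP[cu /eqP fu].
    apply: (key u cu); first by rewrite !inE fu eqxx orbT.
    move=> x cx; rewrite !inE => /orP[/eqP vx|/eqP vx]; first by move: cx; rewrite -vx cv.
    have : x \in [set x | ~~ c x & f x == v] by rewrite inE cx vx eqxx.
    by rewrite Hu inE => /eqP.
  + apply: (key v (negbT cv)); first by rewrite !inE eqxx.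
    move=> x cx; rewrite !inE => /orP[/eqP -> //|/eqP vx].
    by move: (implyP (hA x) cx); rewrite -vx cv.
Qed.

Lemma P2 f : Good f -> fM (gM f) = f.
Proof.
move=> G; have PM := P1 G; move: G.
rewrite /Good /Bij -!andbA => /and4P[/forallP hB /forallP hA /forallP hU /forallP hE].
apply/ffunP=> x; case cx: (c x).
- by rewrite ffunE cx; symmetry; apply/eqP; apply: (implyP (hB x) cx).
- have m1 := fM_mate PM (negbT cx).
  have m2 : mate (gM f) x (f x) by apply/imsetP; exists x; rewrite ?inE ?cx.
  exact: (mate_uniq PM m1 m2).
Qed.

Lemma card_match : #|[set M | perfect_matching e M]| = #|[set f | Good f]|.
Proof.
have -> : [set M | perfect_matching e M] = gM @: [set f | Good f].
  apply/setP=> M; rewrite inE; apply/idP/imsetP.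
  - by move=> PM; exists (fM M); rewrite ?inE ?P3 ?P4.
  - by case=> f; rewrite inE => G ->; apply: P1.
apply: card_in_imset => f g; rewrite !inE => Gf Gg E.
by rewrite -(P2 Gf) -(P2 Gg) E.
Qed.

Lemma inv_even (U : finType) (h : U -> U) (S : {set U}) :
  (forall x, x \in S -> h x \in S) -> (forall x, x \in S -> h (h x) = x) ->
  (forall x, x \in S -> h x != x) -> ~~ odd #|S|.
Proof.
elim: {S}#|S|.+1 {-2}S (ltnSn #|S|) => // n IH S hS hcl hinv hfp.
case: (set_0Vmem S) => [-> |[x xS]]; first by rewrite cards0.
set S' := S :\ x :\ h x.
have hxS : h x \in S :\ x by rewrite !inE hfp // hcl.
have E : #|S| = (#|S'|).+2 by rewrite (cardsD1 x S) xS (cardsD1 (h x) (S :\ x)) hxS.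
rewrite E /= negbK.
have inS' y : (y \in S') = [&& y != h x, y != x & y \in S] by rewrite !inE.
apply: IH.
- by move: hS; rewrite E ltnS => /ltnW.
- move=> y; rewrite inS' => /and3P[y1 y2 yS]; rewrite inS' hcl // andbT.
  apply/andP; split; apply/eqP => H.
  + by move: y2; rewrite -(hinv y yS) H hinv ?eqxx.
  + by move: y1; rewrite -(hinv y yS) H eqxx.
- by move=> y; rewrite inS' => /and3P[_ _ yS]; apply: hinv.
- by move=> y; rewrite inS' => /and3P[_ _ yS]; apply: hfp.
Qed.

Lemma card_sum (U : finType) (W : {set U}) (P : pred U) :
  #|[set x in W | P x]| = \sum_(x in W) P x.
Proof.
rewrite -sum1_card (eq_bigl (fun x => (x \in W) && P x)); last by move=> x; rewrite inE.
rewrite big_mkcondr /=; apply: eq_bigr => x _; by case: (P x).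
Qed.

Section Parity.
Variables (C : {set T}) (a0 : T).
Variable (chC : channel e C).
Variable (a0C : a0 \in C) (ca0 : ~~ c a0).

Definition W := [set f | Bij f && [forall x, (~~ c x && (x != a0)) ==> e x (f x)]].
Definition Sa a := [set f in W | e a (f a0)].

Lemma W_c f : f \in W -> c (f a0).
Proof. by rewrite inE /Bij -!andbA => /and4P[_ /forallP /(_ a0) /implyP H _ _]; apply: H. Qed.

Lemma Sa_even a : a != a0 -> ~~ odd #|Sa a|.
Proof.
move=> aa0; case ca: (c a).
  have -> : Sa a = set0.
    apply/setP=> f; rewrite inE in_set0; apply/negP => /andP[fW ea].
    by move: (cdiff ea); rewrite ca (W_c fW).
  by rewrite cards0.
pose sw x := if x == a0 then a else if x == a then a0 else x.
have swK : involutive sw.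
  move=> x; rewrite /sw; case: (eqVneq x a0) => [->|x0].
    by rewrite ?eqxx /= ?(negbTE aa0) /= ?eqxx.
  case: (eqVneq x a) => [->|xa]; first by rewrite ?eqxx /= ?(negbTE x0) /= ?eqxx.
  by rewrite /= ?(negbTE x0) ?(negbTE xa).
have swa0 : sw a0 = a by rewrite /sw eqxx.
have swa : sw a = a0 by rewrite /sw (negbTE aa0) eqxx.
have swc x : c (sw x) = c x.
  by rewrite /sw; case: (eqVneq x a0) => [->|_]; [rewrite ca (negbTE ca0)|
     case: (eqVneq x a) => [->|//]; rewrite ca (negbTE ca0)].
have swo x : x != a0 -> x != a -> sw x = x by move=> h1 h2; rewrite /sw (negbTE h1) (negbTE h2).
pose h (f : {ffun T -> T}) : {ffun T -> T} := [ffun x => f (sw x)].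
have hinj f (fW : f \in W) : f a != f a0.
  apply/eqP=> E; move: (fW); rewrite inE /Bij -!andbA => /and4P[_ _ /forallP /(_ (f a0)) hU _].
  move: hU; rewrite (W_c fW) /= => /cards1P[u Hu].
  have : a \in [set x | ~~ c x & f x == f a0] by rewrite inE ca E eqxx.
  have : a0 \in [set x | ~~ c x & f x == f a0] by rewrite inE ca0 eqxx.
  by rewrite Hu !inE => /eqP E1 /eqP E2; move: aa0; rewrite E1 E2 eqxx.
apply: (inv_even (h := h)).
- move=> f; rewrite !inE /Bij -!andbA => /and5P[/forallP hB /forallP hA /forallP hU /forallP hE ea].
  rewrite !ffunE swa0; apply/and5P; split.
  + apply/forallP=> x; apply/implyP=> cx; rewrite ffunE swo ?(implyP (hB x)) //.
      by apply/eqP=> E; move: cx; rewrite E (negbTE ca0).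
    by apply/eqP=> E; move: cx; rewrite E ca.
  + by apply/forallP=> x; apply/implyP=> cx; rewrite ffunE (implyP (hA _)) // swc.
  + apply/forallP=> y; apply/implyP=> cy.
    have -> : [set x | ~~ c x & h f x == y] = sw @: [set x | ~~ c x & f x == y].
      apply/setP=> z; rewrite inE ffunE; apply/idP/imsetP.
      * by move=> /andP[cz fz]; exists (sw z); rewrite ?swK // inE swc cz.
      * by case=> x; rewrite inE => /andP[cx fx] ->; rewrite swK swc cx.
    by rewrite card_imset ?(implyP (hU y)) //; apply: can_inj swK.
  + apply/forallP=> x; apply/implyP=> /andP[cx xa0]; rewrite ffunE.
    case: (eqVneq x a) => [->|xa]; first by rewrite swa.
    by rewrite swo // (implyP (hE x)) // cx xa0.
  + by rewrite (implyP (hE a)) // ca.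
- by move=> f _; apply/ffunP=> x; rewrite !ffunE swK.
- move=> f; rewrite inE => /andP[fW _]; apply/eqP=> /ffunP /(_ a0).
  by rewrite ffunE swa0; apply/eqP; apply: hinj.
Qed.

Lemma Good_even : ~~ odd #|[set f | Good f]|.
Proof.
set Ca := [set a in C | a != a0].
have E1 : [set f | Good f] = [set f in W | e a0 (f a0)].
  apply/setP=> f; rewrite !inE /Good; apply/andP/andP.
  - case=> ->; move/forallP=> hE; split; last by rewrite (implyP (hE a0)).
    by apply/forallP=> x; apply/implyP=> /andP[cx _]; rewrite (implyP (hE x)).
  - case=> /andP[-> /forallP hE] ea; split=> //; apply/forallP=> x; apply/implyP=> cx.
    case: (eqVneq x a0) => [->//|xa0]; by rewrite (implyP (hE x)) // cx xa0.
have S1 : ~~ odd (\sum_(a in Ca) #|Sa a|).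
  apply: (big_ind (fun n => ~~ odd n)) => //.
    by move=> m n hm hn; rewrite oddD (negbTE hm) (negbTE hn).
  by move=> a; rewrite inE => /andP[_]; apply: Sa_even.
have S2 : \sum_(a in Ca) #|Sa a| = \sum_(f in W) #|[set a in Ca | e a (f a0)]|.
  rewrite (eq_bigr (fun a => \sum_(f in W) e a (f a0))); last by move=> a _; rewrite card_sum.
  rewrite exchange_big /=; apply: eq_bigr => f _; by rewrite card_sum.
have S3 f : f \in W -> #|[set a in Ca | e a (f a0)]| %% 2 = e a0 (f a0) %% 2.
  move=> fW; have := chC (f a0).
  rewrite (cardsD1 a0) !inE a0C esym /=.
  have -> : [set u in C | e (f a0) u] :\ a0 = [set a in Ca | e a (f a0)].
    by apply/setP=> u; rewrite !inE esym; case: (u \in C); case: (u != a0).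
  rewrite oddD !modn2; case: (e a0 (f a0)) => /=; by case: (odd #|[set a in Ca | e a (f a0)]|).
have S4 : (\sum_(f in W) #|[set a in Ca | e a (f a0)]|) %% 2 = #|[set f | Good f]| %% 2.
  rewrite -modn_summ (eq_bigr (fun f : {ffun T -> T} => e a0 (f a0) %% 2)); last by move=> f; apply: S3.
  by rewrite modn_summ -card_sum -E1.
move: S1 S4; rewrite S2 !modn2.
case: (odd #|[set f | Good f]|); by case: (odd (\sum_(f in W) _)).
Qed.
End Parity.
End Match.

Theorem corollary5p3 (T : finType) (e : rel T) :
  simple_graph e -> bipartite e ->
  (exists C : {set T}, C != set0 /\ channel e C) ->
  ~~ odd (num_perfect_matchings e).
Proof.
move=> [esym eirr] [c0 hc0] [C [CN chC]].
case: (set_0Vmem C) => [CE|[x0 x0C]]; first by move: CN; rewrite CE eqxx.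
pose c x := c0 x != c0 x0.
have ebip : forall x y, e x y -> c x != c y.
  move=> x y /hc0; rewrite /c; by case: (c0 x); case: (c0 y); case: (c0 x0).
have cx0 : ~~ c x0 by rewrite /c eqxx.
rewrite /num_perfect_matchings (card_match esym eirr ebip).
exact: (Good_even esym ebip chC x0C cx0).
Qed.
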